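(* Let $k\ge1$. For all $0\le y_1\le y_2\le\dots\le y_k\le1$ we have $H_k(y_1,\dots,y_k)\ge0$, where \[ H_k(y_1,\dots,y_k):=\sum_{i=1}^{k}(1-y_i)\,y_{i+1}y_{i+2}\cdots y_k\;f_k(y_1)f_k(y_2)\cdots f_k(y_{i-1})\;-\;\prod_{i=1}^k f_k(y_i), \] with empty products equal to $1$.
   Context: For an integer $k\ge1$, $f_k:[0,1]\to[0,1]$ denotes the unique decreasing function satisfying $f_k(x)^k-f_k(x)^{k+1}=x^k-x^{k+1}$ for all $x\in[0,1]$; it is continuous with $f_k(0)=1$, $f_k(1)=0$. *)

(* Defs.v *)
From Stdlib Require Import Reals.
Open Scope R_scope.

Fixpoint prodR (g : nat -> R) (n : nat) : R :=
  match n with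
  | O => 1
  | S m => prodR g m * g m
  end.

Fixpoint sumR (g : nat -> R) (n : nat) : R :=
  match n with
  | O => 0
  | S m => sumR g m + g m
  end.

(* f is "the" f_k: decreasing on [0,1], maps [0,1] into [0,1], and
   f(x)^k - f(x)^(k+1) = x^k - x^(k+1) on [0,1]. Such f is unique. *)
Definition is_fk (k : nat) (f : R -> R) : Prop :=
  (forall x, 0 <= x <= 1 -> 0 <= f x <= 1) /\
  (forall x y, 0 <= x <= 1 -> 0 <= y <= 1 -> x < y -> f y < f x) /\
  (forall x, 0 <= x <= 1 -> f x ^ k - f x ^ (k + 1) = x ^ k - x ^ (k + 1)).

(* H_k(y_1,...,y_k), with y indexed from 1:
   sum_{i=1}^k (1-y_i) * prod_{j=i+1}^k y_j * prod_{j=1}^{i-1} f(y_j)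
   - prod_{i=1}^k f(y_i) *)
Definition Hk (k : nat) (f : R -> R) (y : nat -> R) : R :=
  sumR (fun i0 => let i := S i0 in
          (1 - y i) * prodR (fun j0 => y (i + 1 + j0)%nat) (k - i)
                    * prodR (fun j0 => f (y (S j0))) (i - 1)) k
  - prodR (fun j0 => f (y (S j0))) k.

(* Main.v *)
Require Import Defs.
From Stdlib Require Import Reals Lra Lia Psatz.
Open Scope R_scope.

Fixpoint W (n : nat) (a b : R) : R :=
  match n with O => 0 | S m => b * W m a b + a ^ m end.

Lemma W_nonneg n a b : 0 <= a -> 0 <= b -> 0 <= W n a b.
Proof. intros. induction n; simpl. lra. pose proof (pow_le a n H). nra. Qed.

Lemma W_alt n a b : W (S n) a b = a * W n a b + b ^ n.
Proof. induction n. simpl. ring.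
  change (W (S (S n)) a b) with (b * W (S n) a b + a ^ (S n)).
  rewrite IHn at 1. simpl. ring. Qed.

Lemma W_diff n a b : (a - b) * W n a b = a ^ n - b ^ n.
Proof. induction n; simpl. ring.
  transitivity (b*((a-b)*W n a b) + (a-b)*a^n). ring. rewrite IHn. ring. Qed.

Lemma W_split j n a b : W (j + n) a b = b ^ n * W j a b + a ^ j * W n a b.
Proof. induction n.
- rewrite Nat.add_0_r. simpl. ring.
- rewrite Nat.add_succ_r.
  change (W (S (j+n)) a b) with (b * W (j+n) a b + a^(j+n)).
  rewrite IHn, pow_add. simpl. ring. Qed.

Lemma W_diag n a : a * W n a a = INR n * a ^ n.
Proof. induction n. simpl. ring.
  rewrite S_INR. simpl.
  transitivity (a*(a*W n a a) + a*a^n). ring. rewrite IHn. ring. Qed.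

Lemma W_le m a b : 0 <= a <= b -> W (S m) a b <= INR (S m) * b ^ m.
Proof. intros [Ha Hab]. induction m.
- simpl. lra.
- change (W (S (S m)) a b) with (b * W (S m) a b + a ^ (S m)).
  assert (H1 : a ^ S m <= b ^ S m) by (apply pow_incr; lra).
  assert (H2 : b * W (S m) a b <= b * (INR (S m) * b ^ m)) by (apply Rmult_le_compat_l; lra).
  rewrite (S_INR (S m)). simpl pow in *. lra. Qed.

Lemma L1 n a a' b b' : 0<=a<=a' -> 0<=b'<=b -> a^n * W n a' b' <= a'^n * W n a b.
Proof. intros Ha Hb. induction n. simpl. lra.
  rewrite !W_alt.
  assert (H : a*a'*(a^n * W n a' b') <= a*a'*(a'^n * W n a b)).
  { apply Rmult_le_compat_l. nra. exact IHn. }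
  assert (H' : a^(S n) * b'^n <= a'^(S n) * b^n).
  { apply Rmult_le_compat. apply pow_le; lra. apply pow_le; lra.
    apply pow_incr; lra. apply pow_incr; lra. }
  simpl pow in *. lra. Qed.

Lemma L2 n a a' b b' : 0<=a<=a' -> 0<=b'<=b -> b'^n * W n a b <= b^n * W n a' b'.
Proof. intros Ha Hb. induction n. simpl. lra.
  simpl W.
  assert (H : b*b'*(b'^n * W n a b) <= b*b'*(b^n * W n a' b')).
  { apply Rmult_le_compat_l. nra. exact IHn. }
  assert (H' : b'^(S n) * a^n <= b^(S n) * a'^n).
  { apply Rmult_le_compat. apply pow_le; lra. apply pow_le; lra.
    apply pow_incr; lra. apply pow_incr; lra. }
  simpl pow in *. lra. Qed.

Lemma mono0 j n a a' b b' : 0<=a<=a' -> 0<=b'<=b ->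
  b'^n * W j a' b' * W (j+n) a b <= b^n * W j a b * W (j+n) a' b'.
Proof. intros Ha Hb. rewrite !W_split.
  pose proof (L1 j a a' b b' Ha Hb). pose proof (L2 n a a' b b' Ha Hb).
  assert (0 <= a^j * W j a' b') by (apply Rmult_le_pos; [apply pow_le|apply W_nonneg]; lra).
  assert (0 <= b'^n * W n a b) by (apply Rmult_le_pos; [apply pow_le|apply W_nonneg]; lra).
  assert ((a^j * W j a' b') * (b'^n * W n a b) <= (a'^j * W j a b) * (b^n * W n a' b'))
    by (apply Rmult_le_compat; lra).
  lra. Qed.

Lemma mono j k a a' b b' : (j <= k)%nat -> 0<=a<=a' -> 0<=b'<=b ->
  b'^(k-j) * W j a' b' * W k a b <= b^(k-j) * W j a b * W k a' b'.
Proof. intros Hjk Ha Hb. remember (k-j)%nat as n.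
  assert (k = j + n)%nat by lia. subst k. apply mono0; auto. Qed.

Lemma W_pos k f x : (1<=k)%nat -> is_fk k f -> 0<=x<=1 -> 0 < W k x (f x).
Proof. intros Hk [H1 [H2 H3]] Hx. destruct k as [|m]; [lia|].
  destruct (Req_dec x 0) as [E|E].
  - subst x. rewrite W_alt.
    assert (f 1 < f 0) by (apply H2; lra). pose proof (H1 1 ltac:(lra)).
    assert (0 < f 0 ^ m) by (apply pow_lt; lra). lra.
  - simpl W. pose proof (H1 x Hx).
    assert (0 <= W m x (f x)) by (apply W_nonneg; lra).
    assert (0 < x ^ m) by (apply pow_lt; lra). nra. Qed.

Lemma g_decr k u v : (1<=k)%nat -> 0 <= u < v -> v <= 1 -> INR k * (1-u) < u ->
  v^k - v^(k+1) < u^k - u^(k+1).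
Proof. intros Hk Hu Hv HK. destruct k as [|m]; [lia|].
  replace (S m + 1)%nat with (S (S m)) by lia.
  pose proof (W_diff (S m) u v) as Hd1. pose proof (W_diff (S (S m)) u v) as Hd2.
  rewrite W_alt in Hd2.
  pose proof (W_le m u v ltac:(lra)) as Hle.
  assert (Hvm : 0 < v^m) by (apply pow_lt; lra).
  assert (X : 0 < v^(S m) - (1-u)*W (S m) u v).
  { assert ((1-u)*W (S m) u v <= (1-u)*(INR (S m) * v^m)) by (apply Rmult_le_compat_l; lra).
    assert (0 < v^m * (v - INR (S m)*(1-u))) by (apply Rmult_lt_0_compat; lra).
    simpl pow. lra. }
  assert (0 < (v-u)*(v^(S m) - (1-u)*W (S m) u v)) by (apply Rmult_lt_0_compat; lra).
  lra. Qed.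

Lemma fix_le k f a : (1<=k)%nat -> is_fk k f -> 0<=a<=1 -> f a = a -> a <= INR k * (1-a).
Proof. intros Hk Hf Ha Hfa. destruct (Rle_or_lt a (INR k*(1-a))) as [|Hlt]; auto. exfalso.
  pose proof Hf as [H1 [H2 H3]].
  assert (HK : 1 <= INR k) by (apply (le_INR 1); lia).
  set (K := INR k) in *.
  set (c := K/(K+1)).
  assert (Hc : c*(K+1) = K) by (unfold c; field; lra).
  assert (Hc0 : 0 <= c) by (unfold c; apply Rmult_le_pos; [lra|left; apply Rinv_0_lt_compat; lra]).
  assert (Hac : c < a) by nra.
  set (x := (a + c)/2).
  assert (Hx1 : c < x < a) by (unfold x; lra).
  assert (Hx2 : K*(1-x) < x) by nra.
  assert (Hz : f a < f x) by (apply H2; unfold x; lra).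
  assert (Hx01 : 0 <= x <= 1) by (unfold x; split; lra).
  pose proof (H1 x Hx01).
  assert (Hxz : 0 <= x < f x) by lra.
  pose proof (g_decr k x (f x) Hk Hxz ltac:(lra) Hx2).
  pose proof (H3 x Hx01). lra. Qed.

Lemma key k f x : (1<=k)%nat -> is_fk k f -> 0<=x<=1 -> f x ^ k <= (1 - x) * W k x (f x).
Proof. intros Hk Hf Hx. pose proof Hf as [H1 [H2 H3]].
  destruct (Req_dec x (f x)) as [E|E].
  - rewrite <- E. pose proof (fix_le k f x Hk Hf Hx (eq_sym E)) as Hfix.
    pose proof (W_diag k x) as Hd.
    destruct (Req_dec x 0) as [E0|E0].
    + subst x. rewrite pow_i by lia. pose proof (W_nonneg k 0 0 ltac:(lra) ltac:(lra)). lra.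
    + assert (Hxk : 0 <= x^k) by (apply pow_le; lra).
      assert (x * x^k <= INR k * (1-x) * x^k) by (apply Rmult_le_compat_r; lra).
      apply (Rmult_le_reg_l x). lra.
      replace (x * ((1-x) * W k x x)) with ((1-x) * (x * W k x x)) by ring.
      rewrite Hd. lra.
  - pose proof (H3 x Hx) as G. rewrite !pow_add in G. simpl pow in G.
    pose proof (W_diff k x (f x)) as Hd.
    assert (Ep : (x - f x) * ((1-x)*W k x (f x) - f x ^ k) = 0).
    { replace ((x - f x) * ((1-x)*W k x (f x) - f x ^ k))
        with ((1-x)*((x - f x)*W k x (f x)) - (x - f x)* f x ^ k) by ring.
      rewrite Hd. lra. }
    apply Rmult_integral in Ep. destruct Ep; lra. Qed.

Lemma sumR_ext g h n : (forall i, (i<n)%nat -> g i = h i) -> sumR g n = sumR h n.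
Proof. induction n; intros H; simpl. auto. rewrite IHn by (intros; apply H; lia).
  rewrite H by lia. auto. Qed.

Lemma sumR_scal c g n : sumR (fun i => c * g i) n = c * sumR g n.
Proof. induction n; simpl. ring. rewrite IHn. ring. Qed.

Definition Sj (f : R -> R) (y : nat -> R) (j : nat) :=
  sumR (fun i0 => (1 - y (S i0)) * prodR (fun j0 => y (S i0 + 1 + j0)%nat) (j - S i0)
                  * prodR (fun j0 => f (y (S j0))) i0) j.

Lemma Sj_rec f y j : Sj f y (S j) =
  y (S j) * Sj f y j + (1 - y (S j)) * prodR (fun j0 => f (y (S j0))) j.
Proof. unfold Sj. cbn [sumR]. rewrite Nat.sub_diag. cbn [prodR].
  rewrite <- sumR_scal. f_equal; [|ring].
  apply sumR_ext. intros i Hi.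
  replace (S j - S i)%nat with (S (j - S i)) by lia. cbn [prodR].
  replace (S i + 1 + (j - S i))%nat with (S j) by lia. ring. Qed.

Lemma Hk_eq k f y : Hk k f y = Sj f y k - prodR (fun j0 => f (y (S j0))) k.
Proof. unfold Hk, Sj. f_equal. apply sumR_ext. intros i Hi. cbv zeta.
  replace (S i - 1)%nat with i by lia. reflexivity. Qed.

Theorem mainTheorem5 (k : nat) (f : R -> R) (y : nat -> R) :
  (1 <= k)%nat ->
  is_fk k f ->
  0 <= y 1%nat ->
  (forall i, (1 <= i < k)%nat -> y i <= y (S i)) ->
  y k <= 1 ->
  0 <= Hk k f y.
Proof.
  intros Hk1 Hf H0 Hmon H1.
  pose proof Hf as [Hf1 [Hf2 Hf3]].
  assert (Hlo : forall i, (1<=i<=k)%nat -> 0 <= y i).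
  { induction i; intros Hi. lia. destruct i. exact H0.
    pose proof (Hmon (S i) ltac:(lia)). pose proof (IHi ltac:(lia)). lra. }
  assert (Hhi : forall d, (d <= k-1)%nat -> y (k - d)%nat <= 1).
  { induction d; intros Hd. rewrite Nat.sub_0_r. exact H1.
    pose proof (Hmon (k - S d)%nat ltac:(lia)).
    replace (S (k - S d)) with (k - d)%nat in * by lia.
    pose proof (IHd ltac:(lia)). lra. }
  assert (Hy : forall i, (1<=i<=k)%nat -> 0 <= y i <= 1).
  { intros i Hi. split. apply Hlo; auto.
    replace i with (k - (k - i))%nat by lia. apply Hhi. lia. }
  set (F := fun j0 => f (y (S j0))).
  assert (HB : forall j, (j<=k)%nat -> 0 <= prodR F j).
  { induction j; intros Hj; simpl. lra.
    pose proof (Hf1 _ (Hy (S j) ltac:(lia))). unfold F at 2.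
    pose proof (IHj ltac:(lia)). nra. }
  assert (Step : forall j, (j < k)%nat ->
    let a := y (S j) in let b := f a in
    prodR F j * b^(k-j) * W j a b <= Sj f y j * W k a b ->
    prodR F (S j) * b^(k - S j) * W (S j) a b <= Sj f y (S j) * W k a b).
  { intros j Hj a b D.
    pose proof (Hy (S j) ltac:(lia)) as Ha. fold a in Ha.
    pose proof (Hf1 a Ha) as Hb. fold b in Hb.
    pose proof (key k f a Hk1 Hf Ha) as Hkey. fold b in Hkey.
    pose proof (HB j ltac:(lia)) as HBj.
    rewrite Sj_rec. fold a. cbn [prodR]. change (F j) with b.
    rewrite W_alt.
    remember (k - S j)%nat as e.
    assert (Ee : (k - j)%nat = S e) by lia. rewrite Ee in D.
    assert (Ek : b ^ k = b^(S e) * b^j) by (rewrite <- pow_add; f_equal; lia).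
    assert (X1 : a * (prodR F j * b ^ S e * W j a b) <= a * (Sj f y j * W k a b))
      by (apply Rmult_le_compat_l; lra).
    assert (X2 : prodR F j * b^k <= prodR F j * ((1-a) * W k a b))
      by (apply Rmult_le_compat_l; lra).
    rewrite Ek in X2. simpl pow in *. change (prodR (fun j0 : nat => f (y (S j0))) j) with (prodR F j). lra. }
  assert (Ind : forall j, (j < k)%nat ->
    let a := y (S j) in let b := f a in
    prodR F j * b^(k-j) * W j a b <= Sj f y j * W k a b).
  { induction j; intros Hj a b.
    - simpl. unfold Sj. simpl. lra.
    - pose proof (Step j ltac:(lia) (IHj ltac:(lia))) as C. cbv zeta in C.
      set (a0 := y (S j)) in *. set (b0 := f a0) in *.
      pose proof (Hy (S j) ltac:(lia)) as Ha0. fold a0 in Ha0.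
      pose proof (Hy (S (S j)) ltac:(lia)) as Ha. fold a in Ha.
      assert (Haa : a0 <= a) by (apply Hmon; lia).
      assert (Hbb : b <= b0).
      { destruct (Req_dec a0 a) as [E|E]. unfold b, b0. rewrite E. lra.
        left. apply Hf2; auto; lra. }
      pose proof (Hf1 a Ha) as Hb. fold b in Hb.
      pose proof (Hf1 a0 Ha0) as Hb0. fold b0 in Hb0.
      pose proof (mono (S j) k a0 a b0 b ltac:(lia) ltac:(lra) ltac:(lra)) as M.
      pose proof (W_pos k f a0 Hk1 Hf Ha0) as Wp0. fold b0 in Wp0.
      pose proof (W_pos k f a Hk1 Hf Ha) as Wp. fold b in Wp.
      pose proof (HB (S j) ltac:(lia)) as HBj.
      assert (Y1 : prodR F (S j) * b0 ^ (k - S j) * W (S j) a0 b0 * W k a b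
                   <= Sj f y (S j) * W k a0 b0 * W k a b)
        by (apply Rmult_le_compat_r; lra).
      assert (Y2 : prodR F (S j) * (b ^ (k - S j) * W (S j) a b * W k a0 b0)
                   <= prodR F (S j) * (b0 ^ (k - S j) * W (S j) a0 b0 * W k a b))
        by (apply Rmult_le_compat_l; lra).
      apply (Rmult_le_reg_l (W k a0 b0)). lra. nra. }
  destruct k as [|m]; [lia|].
  pose proof (Step m ltac:(lia) (Ind m ltac:(lia))) as C. cbv zeta in C.
  rewrite Nat.sub_diag in C. simpl pow in C.
  pose proof (W_pos (S m) f (y (S m)) Hk1 Hf (Hy (S m) ltac:(lia))) as Wp.
  rewrite Hk_eq. fold F.
  assert (prodR F (S m) <= Sj f y (S m)).
  { apply (Rmult_le_reg_r (W (S m) (y (S m)) (f (y (S m))))). auto. lra. }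
  lra.
Qed.
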